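(* Let $k$ be a field and $H\subsetneq\mathbb{N}$ a numerical semigroup with Frobenius number $f$, and let $R=k[[H]]\subseteq k[[t]]$. Then $R$ has minimal canonical conductor if and only if $f-1$ is a quasi-Frobenius number of $H$.
   Context: A numerical semigroup is an additive submonoid $H\subseteq\mathbb{N}$ with $\mathbb{N}\setminus H$ finite; its Frobenius number $f$ is the largest integer not in $H$. An integer $x\notin H$ is a quasi-Frobenius number of $H$ if $x+h\in H$ for all $h\in H$ with $h\neq 0$. $k[[H]]$ is the subring of the power series ring $k[[t]]$ consisting of power series $\sum c_h t^h$ supported on $H$; it is a one-dimensional analytically unramified local domain with integral closure $\overline{R}=k[[t]]$. A one-dimensional singular analytically unramified local domain $R$ with canonical ideal $\omega$ has minimal canonical conductor if $b(\omega)=\mathfrak{c}(R)$, where: $B(\omega)=\bigcup_{n\ge0}(\omega^n:\omega^n)$ with $\omega^n:\omega^n=\{x\in Q(R): x\omega^n\subseteq\omega^n\}$; $b(\omega)=\{x\in B(\omega): xB(\omega)\subseteq R\}$; and $\mathfrak{c}(R)=\{x\in\overline{R}: x\overline{R}\subseteq R\}$. Equivalently, $B(\omega)=\overline{R}$. *)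

(* Defs.v *)
From HB Require Import structures.
From mathcomp Require Import all_boot all_order all_algebra.
From mathcomp Require Import boolp classical_sets fsbigop.

Set Implicit Arguments.
Unset Strict Implicit.
Unset Printing Implicit Defensive.

Import Order.TTheory GRing.Theory Num.Theory.
Local Open Scope ring_scope.
Local Open Scope classical_set_scope.

Definition numerical_semigroup (H : nat -> Prop) : Prop :=
  H 0%N /\ (forall a b, H a -> H b -> H (a + b)%N) /\
  exists N : nat, forall n, (N <= n)%N -> H n.

Definition inHZ (H : nat -> Prop) (x : int) : Prop :=
  exists m : nat, x = m%:Z /\ H m.

Definition is_frobenius (H : nat -> Prop) (f : int) : Prop :=
  ~ inHZ H f /\ forall n : int, f < n -> inHZ H n.

Definition is_quasi_frobenius (H : nat -> Prop) (x : int) : Prop :=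
  ~ inHZ H x /\ forall h : nat, H h -> h <> 0%N -> inHZ H (x + h%:Z).

(* coefficient functions; a formal series sum_n x n t^n *)
Definition series (K : fieldType) := int -> K.

Definition is_laurent (K : fieldType) (x : series K) : Prop :=
  exists m : int, forall n, n < m -> x n = 0.

Definition ls0 (K : fieldType) : series K := fun _ => 0.
Definition lsadd (K : fieldType) (x y : series K) : series K :=
  fun n => x n + y n.
(* Cauchy product (the index set is finite for Laurent series) *)
Definition lsmul (K : fieldType) (x y : series K) : series K :=
  fun n => \sum_(i \in [set i : int | x i != 0 /\ y (n - i) != 0])
             (x i * y (n - i)).

(* k[[t]] (= the integral closure of k[[H]]) *)
Definition in_kt (K : fieldType) (x : series K) : Prop :=
  forall n : int, n < 0 -> x n = 0.

Definition in_kH (K : fieldType) (H : nat -> Prop) (x : series K) : Prop :=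
  forall n : int, x n != 0 -> inHZ H n.

(* Q(R), the total quotient ring of R, realized inside k((t)) *)
Definition in_QR (K : fieldType) (H : nat -> Prop) (x : series K) : Prop :=
  is_laurent x /\
  exists b : series K, in_kH H b /\ b <> ls0 K /\ in_kH H (lsmul b x).

Definition submodQ (K : fieldType) (H : nat -> Prop) (M : set (series K)) :=
  (M `<=` in_QR H) /\ M (ls0 K) /\
  (forall x y, M x -> M y -> M (lsadd x y)) /\
  (forall r x, in_kH H r -> M x -> M (lsmul r x)).

(* a fractional ideal: an R-submodule of Q(R) containing a regular (here:
   nonzero) element and with d M contained in R for some regular d in R *)
Definition frac_ideal (K : fieldType) (H : nat -> Prop) (M : set (series K)) :=
  submodQ H M /\ (exists x, M x /\ x <> ls0 K) /\
  (exists d, in_kH H d /\ d <> ls0 K /\ forall x, M x -> in_kH H (lsmul d x)).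

Definition colon (K : fieldType) (H : nat -> Prop) (I J : set (series K)) :
  set (series K) :=
  [set x | in_QR H x /\ forall y, J y -> I (lsmul x y)].

(* canonical ideal (Herzog--Kunz): fractional ideal w with w:(w:I) = I for
   every fractional ideal I *)
Definition canonical_ideal (K : fieldType) (H : nat -> Prop)
  (w : set (series K)) : Prop :=
  frac_ideal H w /\
  forall I, frac_ideal H I -> colon H w (colon H w I) = I.

Definition prodI (K : fieldType) (I J : set (series K)) : set (series K) :=
  [set x | exists s : seq (series K * series K),
     foldr (fun p (P : Prop) => (I p.1 /\ J p.2) /\ P) True s /\
     x = foldr (fun p acc => lsadd (lsmul p.1 p.2) acc) (ls0 K) s].

Fixpoint powI (K : fieldType) (H : nat -> Prop) (w : set (series K)) (n : nat)
  : set (series K) :=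
  match n with
  | 0%N => in_kH H
  | n'.+1 => prodI (powI H w n') w
  end.

Definition Bw (K : fieldType) (H : nat -> Prop) (w : set (series K)) :=
  [set x | exists n : nat, colon H (powI H w n) (powI H w n) x].

Definition bw (K : fieldType) (H : nat -> Prop) (w : set (series K)) :=
  [set x | Bw H w x /\ forall y, Bw H w y -> in_kH H (lsmul x y)].

Definition conductor (K : fieldType) (H : nat -> Prop) : set (series K) :=
  [set x | in_kt x /\ forall y, in_kt y -> in_kH H (lsmul x y)].

(* k[[H]] has minimal canonical conductor: b(w) = c(R) (for a canonical
   ideal w; the notion does not depend on the choice, so we quantify over
   all canonical ideals) *)
Definition min_canonical_conductor (K : fieldType) (H : nat -> Prop) : Prop :=
  forall w : set (series K), canonical_ideal H w -> bw H w = @conductor K H.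

(* Main.v *)
Require Import Defs.
From mathcomp Require Import all_boot all_order all_algebra.
From mathcomp Require Import boolp classical_sets fsbigop.
From mathcomp Require Import zify.
Import Order.TTheory GRing.Theory Num.Theory.
Local Open Scope ring_scope.
Set Implicit Arguments.
Unset Strict Implicit.
Unset Printing Implicit Defensive.
Arguments lsadd : simpl never.
Arguments lsmul : simpl never.
Arguments ls0 : simpl never.
Section Series.
Variable K : fieldType.
Local Notation ser := (series K).
Implicit Types a b : ser.

Definition lb a (m : int) := forall n, n < m -> a n = 0.

Lemma lbW a m m' : lb a m -> m' <= m -> lb a m'.
Proof. move=> h le n hn; apply: h; lia. Qed.

Lemma lsmul_seq a b n (s : seq int) : uniq s ->
  (forall i, a i != 0 -> b (n - i) != 0 -> i \in s) ->
  lsmul a b n = \sum_(i <- s) a i * b (n - i).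
Proof.
move=> us cov; rewrite /lsmul; apply: fsbig_fwiden => //.
- by move=> i /= [h1 h2]; exact: cov.
- move=> i /= [_ hP]; rewrite /preimage /=.
  have [a0|anz] := eqVneq (a i) 0; first by rewrite a0 mul0r.
  have [b0|bnz] := eqVneq (b (n - i)) 0; first by rewrite b0 mulr0.
  by exfalso; apply: hP.
Qed.

Definition rng (lo : int) (L : nat) : seq int := [seq lo + k%:Z | k <- iota 0 L].

Lemma mem_rng lo L i : (i \in rng lo L) = (lo <= i) && (i < lo + L%:Z).
Proof.
apply/mapP/andP.
- by move=> [k]; rewrite mem_iota => /andP[_ kL] ->; split; lia.
- move=> [h1 h2]; exists `|i - lo|%N; first by rewrite mem_iota; lia.
  lia.
Qed.

Lemma rng_uniq lo L : uniq (rng lo L).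
Proof.
by rewrite map_inj_uniq ?iota_uniq // => x y /addrI [].
Qed.

Lemma uniq_map_int (f : int -> int) (s : seq int) : injective f -> uniq s -> uniq (map f s).
Proof. by move=> fi us; rewrite map_inj_uniq. Qed.

Lemma lsmul_rng a b ma mb n lo L : lb a ma -> lb b mb -> lo <= ma ->
  n - mb < lo + L%:Z ->
  lsmul a b n = \sum_(i <- rng lo L) a i * b (n - i).
Proof.
move=> ha hb h1 h2; apply: lsmul_seq; first exact: rng_uniq.
move=> i ai bi; rewrite mem_rng; apply/andP; split.
- have: ~ (i < ma) by move=> lt; move: ai; rewrite ha ?eqxx.
  lia.
- have: ~ (n - i < mb) by move=> lt; move: bi; rewrite hb ?eqxx.
  lia.
Qed.

Definition mono (c : K) (m : int) : ser := fun n => if n == m then c else 0.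
Definition one : ser := mono 1 0.
Definition scal (c : K) a : ser := fun n => c * a n.

Lemma lsmul_monol c m a n : lsmul (mono c m) a n = c * a (n - m).
Proof.
rewrite (@lsmul_seq _ _ _ [:: m]) // ?big_seq1 /mono ?eqxx //.
by move=> i; rewrite /mono; case: (i =P m) => [-> _ _|_]; rewrite ?inE ?eqxx.
Qed.

Lemma lsmul_monor a c m n : lsmul a (mono c m) n = a (n - m) * c.
Proof.
rewrite (@lsmul_seq _ _ _ [:: n - m]) // ?big_seq1 /mono.
  by have -> : n - (n - m) == m by apply/eqP; lia.
move=> i _; case: (n - i =P m) => [e _|_]; rewrite ?eqxx // inE; apply/eqP; lia.
Qed.

Lemma lsmul1 a : lsmul one a = a.
Proof. by apply: funext => n; rewrite lsmul_monol mul1r subr0. Qed.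
Lemma lsmulr1 a : lsmul a one = a.
Proof. by apply: funext => n; rewrite lsmul_monor mulr1 subr0. Qed.

Lemma lsmul_const c a : lsmul (mono c 0) a = scal c a.
Proof. by apply: funext => n; rewrite lsmul_monol subr0. Qed.

Lemma lb_mul a b ma mb : lb a ma -> lb b mb -> lb (lsmul a b) (ma + mb).
Proof.
move=> ha hb n hn; rewrite (@lsmul_seq _ _ _ [::]) ?big_nil //.
move=> i ai bi; exfalso.
have: ~ (i < ma) by move=> lt; move: ai; rewrite ha ?eqxx.
have: ~ (n - i < mb) by move=> lt; move: bi; rewrite hb ?eqxx.
lia.
Qed.

Lemma lsmul_lead a b ma mb : lb a ma -> lb b mb ->
  lsmul a b (ma + mb) = a ma * b mb.
Proof.
move=> ha hb; rewrite (@lsmul_seq _ _ _ [:: ma]) ?big_seq1 //.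
  by have -> : ma + mb - ma = mb by lia.
move=> i ai bi; rewrite inE; apply/eqP.
have: ~ (i < ma) by move=> lt; move: ai; rewrite ha ?eqxx.
have: ~ (ma + mb - i < mb) by move=> lt; move: bi; rewrite hb ?eqxx.
lia.
Qed.

Lemma lsmul_supp a b n : lsmul a b n != 0 -> exists i, a i != 0 /\ b (n - i) != 0.
Proof.
move=> h; apply: contrapT => hn; move: h; rewrite (@lsmul_seq _ _ _ [::]) ?big_nil ?eqxx //.
by move=> i ai bi; exfalso; apply: hn; exists i.
Qed.

Definition lau a := is_laurent a.

Lemma lau_lb a : lau a <-> exists m, lb a m.
Proof. by []. Qed.

Lemma lau_mul a b : lau a -> lau b -> lau (lsmul a b).
Proof. move=> [ma ha] [mb hb]; exists (ma + mb); exact: lb_mul. Qed.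

Lemma lau_add a b : lau a -> lau b -> lau (lsadd a b).
Proof.
move=> [ma ha] [mb hb]; exists (Num.min ma mb) => n hn.
rewrite /lsadd ha ?hb ?addr0 //.
  by apply: lt_le_trans hn _; rewrite ge_min lexx orbT.
by apply: lt_le_trans hn _; rewrite ge_min lexx.
Qed.

Lemma lau0 : lau (ls0 K).
Proof. by exists 0. Qed.

Lemma lau_mono c m : lau (mono c m).
Proof. by exists m => n hn; rewrite /mono; case: eqP => // e; move: hn; rewrite e ltxx. Qed.

Lemma lau_scal c a : lau a -> lau (scal c a).
Proof. by move=> [m h]; exists m => n hn; rewrite /scal h ?mulr0. Qed.

End Series.
Section Ring.
Variable K : fieldType.
Local Notation ser := (series K).
Implicit Types a b : ser.

Lemma lb_ge a m i : lb a m -> a i != 0 -> m <= i.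
Proof. move=> h ai; rewrite leNgt; apply/negP => lt; by move: ai; rewrite h ?eqxx. Qed.

Lemma lsmulC a b : lau a -> lau b -> lsmul a b = lsmul b a.
Proof.
move=> [ma ha] [mb hb]; apply: funext => n.
pose L := (`|n| + `|ma| + `|mb|).+1%N.
rewrite (@lsmul_rng _ a b ma mb n ma L) //; last by rewrite /L; lia.
rewrite (@lsmul_seq _ b a n [seq n - i | i <- rng ma L]).
- rewrite [in RHS]big_map; apply: eq_bigr => i _; have -> : n - (n - i) = i by lia.
  by rewrite mulrC.
- by apply: uniq_map_int (rng_uniq _ _) => x y /addrI /oppr_inj.
- move=> j bj aj; apply/mapP; exists (n - j); last by rewrite opprB addrC subrK.
  have := lb_ge hb bj; have := lb_ge ha aj; rewrite mem_rng /L; lia.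
Qed.

Lemma lsmulA a b c : lau a -> lau b -> lau c ->
  lsmul a (lsmul b c) = lsmul (lsmul a b) c.
Proof.
move=> [ma ha] [mb hb] [mc hc]; apply: funext => n.
pose M := Num.min (Num.min ma mb) (Num.min mc 0).
have hM1 : M <= ma by rewrite /M !ge_min lexx.
have hM2 : M <= mb by rewrite /M !ge_min lexx !orbT.
have hM3 : M <= mc by rewrite /M !ge_min lexx !orbT.
have hM4 : M <= 0 by rewrite /M !ge_min lexx !orbT.
have {ha}ha := lbW ha hM1; have {hb}hb := lbW hb hM2; have {hc}hc := lbW hc hM3.
pose L := (`|n| + 4 * `|M|).+1%N.
pose s := rng (2 * M) L.
have us : uniq s by exact: rng_uniq.
have inS : forall i, 2 * M <= i -> i <= n - 2 * M -> i \in s.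
  by move=> i h1 h2; rewrite mem_rng /L; lia.
have E1 : lsmul a (lsmul b c) n =
   \sum_(j <- s) \sum_(i <- s) a j * (b (i - j) * c (n - i)).
  rewrite (@lsmul_seq _ _ _ _ s) //; last first.
    move=> j aj bcj; have := lb_ge ha aj; have := lb_ge (lb_mul hb hc) bcj.
    move=> h1 h2; apply: inS; lia.
  apply: eq_bigr => j _; rewrite -mulr_sumr.
  have [a0|anz] := eqVneq (a j) 0; first by rewrite a0 !mul0r.
  congr (_ * _).
  rewrite (@lsmul_seq _ _ _ _ [seq i - j | i <- s]).
  - rewrite big_map; apply: eq_bigr => i _.
    by have -> : n - j - (i - j) = n - i by lia.
  - by apply: uniq_map_int us => x y /addIr.
  - move=> k bk ck; apply/mapP; exists (k + j); last by rewrite addrK.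
    have := lb_ge hb bk; have := lb_ge hc ck; have := lb_ge ha anz.
    move=> h1 h2 h3; apply: inS; lia.
have E2 : lsmul (lsmul a b) c n =
   \sum_(i <- s) \sum_(j <- s) a j * (b (i - j) * c (n - i)).
  rewrite (@lsmul_seq _ _ _ _ s) //; last first.
    move=> i abi ci; have := lb_ge (lb_mul ha hb) abi; have := lb_ge hc ci.
    move=> h1 h2; apply: inS; lia.
  apply: eq_bigr => i _.
  have [c0|cnz] := eqVneq (c (n - i)) 0.
    by rewrite c0 mulr0 big1 // => j _; rewrite !mulr0.
  under eq_bigr do rewrite mulrA.
  rewrite -mulr_suml; congr (_ * _).
  apply: lsmul_seq => // j aj bj.
  have := lb_ge ha aj; have := lb_ge hb bj; have := lb_ge hc cnz.
  move=> h1 h2 h3; apply: inS; lia.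
by rewrite E1 E2 exchange_big.
Qed.

Lemma lsmulDr a b c : lau a -> lau b -> lau c ->
  lsmul a (lsadd b c) = lsadd (lsmul a b) (lsmul a c).
Proof.
move=> [ma ha] [mb hb] [mc hc]; apply: funext => n.
pose M := - `|mb|%:Z - `|mc|%:Z.
have hb' : lb b M by apply: lbW hb _; rewrite /M; lia.
have hc' : lb c M by apply: lbW hc _; rewrite /M; lia.
have hbc : lb (lsadd b c) M.
  by move=> k hk; rewrite /lsadd hb' ?hc' ?addr0.
pose L := (`|n| + `|ma| + `|M|).+1%N.
rewrite /lsadd (@lsmul_rng _ a _ ma M n ma L) //; try (rewrite /L /M; lia).
rewrite (@lsmul_rng _ a _ ma M n ma L) //; try (rewrite /L /M; lia).
rewrite (@lsmul_rng _ a _ ma M n ma L) //; try (rewrite /L /M; lia).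
by rewrite -big_split; apply: eq_bigr => i _; rewrite mulrDr.
Qed.

Lemma lsmulDl a b c : lau a -> lau b -> lau c ->
  lsmul (lsadd b c) a = lsadd (lsmul b a) (lsmul c a).
Proof.
move=> la lb' lc; rewrite lsmulC ?lsmulDr ?(lsmulC la lb') ?(lsmulC la lc) //.
exact: lau_add.
Qed.

Lemma lsmul0 a : lsmul a (ls0 K) = ls0 K.
Proof.
apply: funext => n; rewrite (@lsmul_seq _ _ _ _ [::]) ?big_nil //.
by move=> i _; rewrite /ls0 eqxx.
Qed.

Lemma ls0mul a : lsmul (ls0 K) a = ls0 K.
Proof.
apply: funext => n; rewrite (@lsmul_seq _ _ _ _ [::]) ?big_nil //.
by move=> i; rewrite /ls0 eqxx.
Qed.

Lemma lsaddC a b : lsadd a b = lsadd b a.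
Proof. by apply: funext => n; rewrite /lsadd addrC. Qed.
Lemma lsaddA a b c : lsadd a (lsadd b c) = lsadd (lsadd a b) c.
Proof. by apply: funext => n; rewrite /lsadd addrA. Qed.
Lemma lsadd0 a : lsadd a (ls0 K) = a.
Proof. by apply: funext => n; rewrite /lsadd /ls0 addr0. Qed.
Lemma ls0add a : lsadd (ls0 K) a = a.
Proof. by apply: funext => n; rewrite /lsadd /ls0 add0r. Qed.

Lemma lsmulCA a b c : lau a -> lau b -> lau c ->
  lsmul a (lsmul b c) = lsmul b (lsmul a c).
Proof.
move=> la lb' lc; rewrite lsmulA // (lsmulC la lb') -lsmulA //.
Qed.

Lemma lsmulAC a b c : lau a -> lau b -> lau c ->
  lsmul (lsmul a b) c = lsmul (lsmul a c) b.
Proof.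
move=> la lb' lc; rewrite -lsmulA // (lsmulC lb' lc) lsmulA //.
Qed.

Lemma scal_mul c a b : lau a -> lau b -> lsmul (scal c a) b = scal c (lsmul a b).
Proof.
move=> la lb'; rewrite -!lsmul_const lsmulA //; exact: lau_mono.
Qed.

Lemma ls_neq0 a n : a n != 0 -> a <> ls0 K.
Proof. by move=> h e; move: h; rewrite e /ls0 eqxx. Qed.

Lemma lau_val a : lau a -> a <> ls0 K -> exists m, lb a m /\ a m != 0.
Proof.
move=> [m0 h0] nz.
have ex : exists k : nat, a (m0 + k%:Z) != 0.
  apply: contrapT => hn; apply: nz; apply: funext => n; rewrite /ls0.
  have [lt|ge] := ltP n m0; first exact: h0.
  apply/eqP; apply: contrapT => /negP hn'; apply: hn; exists `|n - m0|%N.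
  by have -> : m0 + `|n - m0|%N%:Z = n by lia.
case: (ex_minnP ex) => k hk hmin; exists (m0 + k%:Z); split => // n hn.
have [lt|ge] := ltP n m0; first exact: h0.
apply/eqP; apply: contraT => hnz.
have := hmin `|n - m0|%N; have -> : m0 + `|n - m0|%N%:Z = n by lia.
move=> /(_ hnz); lia.
Qed.

End Ring.
Section Inverse.
Variable K : fieldType.
Local Notation ser := (series K).
Implicit Types a b : ser.

Fixpoint invs a (n : nat) : seq K :=
  match n with
  | 0%N => [:: (a 0)^-1]
  | n'.+1 => let s := invs a n' in
     rcons s (- (a 0)^-1 * \sum_(1 <= i < n'.+2) a i%:Z * nth 0 s (n'.+1 - i))
  end.

Lemma size_invs a n : size (invs a n) = n.+1.
Proof. by elim: n => //= n IH; rewrite size_rcons IH. Qed.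

Lemma nth_invs a n m j : (j <= n)%N -> (n <= m)%N -> nth 0 (invs a m) j = nth 0 (invs a n) j.
Proof.
move=> jn; elim: m => [|m IH]; first by rewrite leqn0 => /eqP ->.
rewrite leq_eqVlt => /orP [/eqP -> //|]; rewrite ltnS => nm.
by rewrite /= nth_rcons size_invs ifT ?IH //; apply: leq_ltn_trans jn _.
Qed.

Definition pinv a : ser := fun k => if k < 0 then 0 else nth 0 (invs a `|k|) `|k|.

Lemma pinv0 a : pinv a 0 = (a 0)^-1.
Proof. by []. Qed.

Lemma lb_pinv a : lb (pinv a) 0.
Proof. by move=> n hn; rewrite /pinv hn. Qed.

Lemma pinvS a (n : nat) : pinv a (n.+1)%:Z =
  - (a 0)^-1 * \sum_(1 <= i < n.+2) a i%:Z * pinv a ((n.+1)%:Z - i%:Z).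
Proof.
rewrite /pinv /= nth_rcons size_invs ltnn eqxx; congr (_ * _).
rewrite !big_nat; apply: eq_bigr => i /andP [i1 i2]; congr (_ * _).
have -> : ((n.+1)%:Z - i%:Z < 0) = false by apply/negbTE; rewrite -leNgt; lia.
have -> : `|(n.+1)%:Z - i%:Z|%N = (n.+1 - i)%N by lia.
by rewrite (@nth_invs a (n.+1 - i)%N n (n.+1 - i)%N) //; lia.
Qed.

Lemma sum_neq0 (s : seq nat) (F : nat -> K) : \sum_(i <- s) F i != 0 ->
  exists2 i, i \in s & F i != 0.
Proof.
move=> h; apply: contrapT => hn; move: h; rewrite big1_seq ?eqxx // => i /andP [_ iin].
by apply/eqP; apply: contrapT => /negP hF; apply: hn; exists i.
Qed.

Lemma sum_rng0 (F : int -> K) k : \sum_(i <- rng 0 k) F i = \sum_(0 <= i < k) F i%:Z.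
Proof. by rewrite /rng big_map /index_iota subn0; apply: eq_bigr => i _; rewrite add0r. Qed.

Lemma pinvP a : lb a 0 -> a 0 != 0 -> lsmul a (pinv a) = one K.
Proof.
move=> ha a0; apply: funext => n.
have [nneg|npos] := ltP n 0.
  by rewrite (lb_mul ha (@lb_pinv a)) ?add0r // /one /mono ifF //; apply/negbTE; rewrite ltr0_neq0.
have [k ->] : exists k : nat, n = k%:Z by exists `|n|%N; lia.
case: k => [|k].
  by have := lsmul_lead ha (@lb_pinv a); rewrite add0r => ->; rewrite pinv0 mulfV // /one /mono eqxx.
rewrite (@lsmul_rng _ _ _ 0 0 _ 0 k.+2) //; last by lia.
rewrite sum_rng0 big_ltn // subr0 pinvS /one /mono.
by rewrite mulrA mulrN mulfV // mulN1r addNr.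
exact: lb_pinv.
Qed.

End Inverse.
Section Sep.
Variable K : fieldType.

Lemma sep N (W : set 'rV[K]_N) : W 0 -> (forall u v, W u -> W v -> W (u + v)) ->
  (forall c u, W u -> W (c *: u)) -> forall v, ~ W v ->
  exists yv : nat -> K, (forall u, W u -> \sum_(k < N) u 0 k * yv k = 0) /\
     \sum_(k < N) v 0 k * yv k != 0.
Proof.
move=> W0 WD WZ v nWv.
pose P r := exists m (A : 'M[K]_(m, N)), (forall i, W (row i A)) /\ \rank A = r.
pose Pb := fun r => `[< P r >].
have exP : exists r, Pb r.
  exists 0%N; apply/asboolP; exists 0%N, 0; split; [by case | exact: mxrank0].
have ubP : forall r, Pb r -> (r <= N)%N.
  by move=> r /asboolP [m [A [_ <-]]]; exact: rank_leq_col.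
case: (ex_maxnP exP ubP) => r /asboolP [m [A [rowsA rkA]]] rmax.
have subA : forall u, W u -> (u <= A)%MS.
  move=> u Wu; apply/negPn/negP => nuA.
  have : Pb (\rank (col_mx A u)).
    apply/asboolP; exists (m + 1)%N, (col_mx A u); split => //.
    move=> i; rewrite -[i]splitK; case: (split i) => j /=.
      by rewrite rowKu.
    by rewrite rowKd row_id.
  move/rmax; rewrite -(addsmxE A u).1 -rkA.
  have := mxrank_leqif_sup (addsmxSl A u).
  have -> : ((A + u)%MS <= A)%MS = false.
    apply/negbTE; apply: contra nuA; exact: submx_trans (addsmxSr A u).
  by move=> [h1 h2] le; move: h2; rewrite eqn_leq h1 le.
have nvA : ~~ (v <= A)%MS.
  apply/negP => /submxP [D vD]; apply: nWv; rewrite vD mulmx_sum_row.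
  by apply: (big_ind W) => // i _; exact: WZ.
move: nvA; rewrite submxE => nz.
have [j hj] : exists j, (v *m cokermx A) 0 j != 0.
  apply: contrapT => hn; apply: (negP nz); apply/eqP/matrixP => i k.
  rewrite (ord1 i) [RHS]mxE; apply/eqP; apply: contrapT => /negP h; apply: hn; by exists k.
pose yv (k : nat) := if insub k is Some i then cokermx A i j else 0.
have yvE : forall i : 'I_N, yv i = cokermx A i j by move=> i; rewrite /yv valK.
exists yv; split.
  move=> u /subA; rewrite submxE => /eqP /matrixP /(_ 0 j). rewrite !mxE => e; rewrite -[RHS]e.
  by apply: eq_bigr => k _; rewrite yvE.
move: hj; rewrite mxE; congr (~~ (_ == _)); apply: eq_bigr => k _; by rewrite yvE.
Qed.

End Sep.
Section Semi.
Variable K : fieldType.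
Variable H : nat -> Prop.
Hypothesis H0 : H 0%N.
Hypothesis Hadd : forall a b, H a -> H b -> H (a + b)%N.
Variable NH : nat.
Hypothesis HN : forall n, (NH <= n)%N -> H n.
Variable f : int.
Hypothesis hf : is_frobenius H f.
Hypothesis Hprop : exists n, ~ H n.
Local Notation ser := (series K).
Local Notation R := (@in_kH K H).
Implicit Types x y z : ser.

Lemma inHZ_add a b : inHZ H a -> inHZ H b -> inHZ H (a + b).
Proof. by move=> [m [-> hm]] [m' [-> hm']]; exists (m + m')%N; split => //; apply: Hadd. Qed.

Lemma inHZ_ge0 a : inHZ H a -> 0 <= a.
Proof. by move=> [m [-> _]]. Qed.

Lemma inHZ_nat (n : nat) : H n -> inHZ H n%:Z.
Proof. by move=> h; exists n. Qed.

Lemma inHZ_big a : (NH%:Z <= a) -> inHZ H a.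
Proof. move=> h; exists `|a|%N; split; first lia. apply: HN; lia. Qed.

Lemma inHZ0 : inHZ H 0.
Proof. exact: inHZ_nat. Qed.

Lemma kH_lb x : R x -> lb x 0.
Proof.
move=> hx n hn; apply/eqP; apply: contraT => nz; have := inHZ_ge0 (hx _ nz); lia.
Qed.

Lemma kH_lau x : R x -> lau x.
Proof. by move=> /kH_lb h; exists 0. Qed.

Lemma kH_mul x y : R x -> R y -> R (lsmul x y).
Proof.
move=> hx hy n /lsmul_supp [i [xi yi]].
have -> : n = i + (n - i) by lia.
by apply: inHZ_add; [apply: hx | apply: hy].
Qed.

Lemma kH_add x y : R x -> R y -> R (lsadd x y).
Proof.
move=> hx hy n; rewrite /lsadd.
have [x0|xn] := eqVneq (x n) 0; first by rewrite x0 add0r; apply: hy.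
by move=> _; apply: hx.
Qed.

Lemma kH0 : R (ls0 K).
Proof. by move=> n; rewrite /ls0 eqxx. Qed.

Lemma kH_mono c (m : nat) : H m -> R (mono c m%:Z).
Proof. by move=> hm n; rewrite /mono; case: (n =P m%:Z) => [->|]; [move=> _; exact: inHZ_nat | rewrite eqxx]. Qed.

Lemma kH_one : R (one K).
Proof. exact: (@kH_mono 1 0%N). Qed.

Lemma lb_mono (c : K) m : lb (mono c m) m.
Proof. by move=> n hn; rewrite /mono; case: (n =P m) => // e; move: hn; rewrite e ltxx. Qed.

Lemma kH_pinv e : R e -> R (pinv e).
Proof.
move=> he.
have key : forall n : nat, pinv e n%:Z != 0 -> H n.
  move=> n; elim: n {-2}n (leqnn n) => [|k IH] n.
    by rewrite leqn0 => /eqP -> _.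
  rewrite leq_eqVlt => /orP [/eqP ->|]; last by rewrite ltnS; apply: IH.
  rewrite pinvS mulf_eq0 negb_or => /andP [_ /sum_neq0 [i]].
  rewrite mem_index_iota => /andP [i1 i2]; rewrite mulf_eq0 negb_or => /andP [ei pi].
  have [m [/eqP mi hm]] := he _ ei; move: mi; rewrite eqz_nat => /eqP mi; subst m.
  have e1 : (k.+1)%:Z - i%:Z = (k.+1 - i)%N%:Z by lia.
  rewrite e1 in pi; have hk : H (k.+1 - i)%N by apply: IH pi; lia.
  have -> : (k.+1 = i + (k.+1 - i))%N by lia.
  exact: Hadd hm hk.
move=> n pn; have [lt|ge] := ltP n 0.
  by move: pn; rewrite (@lb_pinv K e n lt) eqxx.
exists `|n|%N; split; first lia.
by apply: key; have -> : `|n|%N%:Z = n by lia.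
Qed.

Lemma kH_inv e : R e -> e 0 != 0 -> exists e', R e' /\ lsmul e e' = one K.
Proof. move=> he e0; exists (pinv e); split; [exact: kH_pinv | exact: pinvP (kH_lb he) e0]. Qed.

Lemma linv x m : lb x m -> x m != 0 -> exists x', lb x' (- m) /\ lsmul x x' = one K.
Proof.
move=> hx xm.
pose u : ser := fun n => x (n + m).
have hu : lb u 0 by move=> n hn; rewrite /u hx //; lia.
have u0 : u 0 != 0 by rewrite /u add0r.
pose v := pinv u.
have uv := pinvP hu u0.
exists (lsmul (mono 1 (- m)) v); split.
  by have := lb_mul (@lb_mono 1 (- m)) (@lb_pinv _ u); rewrite addr0.
have xE : x = lsmul (mono 1 m) u.
  by apply: funext => n; rewrite lsmul_monol mul1r /u subrK.
have lu : lau u by exists 0.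
have lv : lau v by exists 0; exact: lb_pinv.
rewrite xE -lsmulA ?(lau_mono) //; last by apply: lau_mul => //; exact: lau_mono.
rewrite (lsmulCA lu (lau_mono _ _) lv) uv lsmulr1.
  apply: funext => n; rewrite lsmul_monol mul1r /one /mono.
  by have -> : (n - m == - m) = (n == 0) by apply/eqP/eqP; lia.
exact: lau_mono.
Qed.

Lemma lau_QR x : lau x -> in_QR H x.
Proof.
move=> [m hm]; split; first by exists m.
exists (mono 1 (NH + `|m|)%N%:Z); split; first by apply: kH_mono; apply: HN; lia.
split; first by apply: (@ls_neq0 _ _ (NH + `|m|)%N%:Z); rewrite /mono eqxx oner_neq0.
move=> n; rewrite lsmul_monol mul1r => nz; apply: inHZ_big.
have := lb_ge hm nz; lia.
Qed.

Lemma QR_lau x : in_QR H x -> lau x.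
Proof. by case. Qed.

Lemma f_pos : 0 < f.
Proof.
have [n hn] := Hprop; have [nf fb] := hf.
have nf' : n%:Z <= f.
  rewrite leNgt; apply/negP => /fb [m [/eqP e hm]]; move: e; rewrite eqz_nat => /eqP e.
  by apply: hn; rewrite e.
rewrite lt_neqAle; apply/andP; split; last lia.
by apply/eqP => e; apply: nf; rewrite -e; exact: inHZ0.
Qed.

Lemma notH1 : ~ H 1%N.
Proof.
move=> h1; have [n hn] := Hprop; apply: hn; elim: n => // n IH.
have -> : n.+1 = (n + 1)%N by rewrite addn1.
by apply: Hadd.
Qed.

Lemma frob_big a : f < a -> inHZ H a.
Proof. by have [_ h] := hf; apply: h. Qed.

Lemma frob_not : ~ inHZ H f.
Proof. by have [h _] := hf. Qed.

Definition Kw : set ser := fun z => lau z /\ forall n, z n != 0 -> ~ inHZ H (f - n).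

Lemma Kw_lb z : Kw z -> lb z 0.
Proof.
move=> [_ hz] n hn; apply/eqP; apply: contraT => nz; exfalso; apply: (hz _ nz).
apply: frob_big; lia.
Qed.

Lemma Kw_mul r z : R r -> Kw z -> Kw (lsmul r z).
Proof.
move=> hr [lz hz]; split; first exact: lau_mul (kH_lau hr) lz.
move=> n /lsmul_supp [i [ri zi]] hin; apply: (hz _ zi).
have -> : f - (n - i) = (f - n) + i by lia.
exact: inHZ_add hin (hr _ ri).
Qed.

Lemma Kw_add z z' : Kw z -> Kw z' -> Kw (lsadd z z').
Proof.
move=> [lz hz] [lz' hz']; split; first exact: lau_add.
move=> n; rewrite /lsadd.
have [x0|xn] := eqVneq (z n) 0; first by rewrite x0 add0r; apply: hz'.
by move=> _; apply: hz.
Qed.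

Lemma Kw0 : Kw (ls0 K).
Proof. by split; [exact: lau0 | move=> n; rewrite /ls0 eqxx]. Qed.

Lemma Kw_one : Kw (one K).
Proof.
split; first exact: lau_mono.
move=> n; rewrite /one /mono; case: (n =P 0) => [->|]; last by rewrite eqxx.
by rewrite subr0 => _; exact: frob_not.
Qed.

Lemma kH_monoZ c a : inHZ H a -> R (mono c a).
Proof. by move=> h n; rewrite /mono; case: (n =P a) => [->|]; rewrite ?eqxx. Qed.

Lemma frac_R : frac_ideal H R.
Proof.
split; [split; [|split; [|split]] | split].
- by move=> x /kH_lau; exact: lau_QR.
- exact: kH0.
- exact: kH_add.
- exact: kH_mul.
- by exists (one K); split; [exact: kH_one | apply: (@ls_neq0 _ _ 0); rewrite /one /mono eqxx oner_neq0].
- exists (one K); split; first exact: kH_one.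
  split; first by apply: (@ls_neq0 _ _ 0); rewrite /one /mono eqxx oner_neq0.
  by move=> x hx; rewrite lsmul1.
Qed.

Lemma frac_Kw : frac_ideal H Kw.
Proof.
split; [split; [|split; [|split]] | split].
- by move=> x [lx _]; exact: lau_QR.
- exact: Kw0.
- exact: Kw_add.
- exact: Kw_mul.
- by exists (one K); split; [exact: Kw_one | apply: (@ls_neq0 _ _ 0); rewrite /one /mono eqxx oner_neq0].
- exists (mono 1 (f + 1)); split; first by apply: kH_monoZ; apply: frob_big; lia.
  split; first by apply: (@ls_neq0 _ _ (f + 1)); rewrite /mono eqxx oner_neq0.
  move=> z kz n; rewrite lsmul_monol mul1r => nz; apply: frob_big.
  have := lb_ge (Kw_lb kz) nz; lia.
Qed.
Implicit Types I w : set ser.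

Lemma frac_lau I : frac_ideal H I -> forall z, I z -> lau z.
Proof. by move=> [[IQ _] _] z /IQ /QR_lau. Qed.

Lemma frac_lower I : frac_ideal H I -> exists b, forall z, I z -> lb z b.
Proof.
move=> fI; have [_ [_ [d [Rd [dnz dI]]]]] := fI.
have [e [he de]] := lau_val (kH_lau Rd) dnz.
exists (- e) => z Iz.
case: (pselect (z = ls0 K)) => [-> n _ //|znz].
have [mz [hmz zm]] := lau_val (frac_lau fI Iz) znz.
have nz : lsmul d z (e + mz) != 0 by rewrite (lsmul_lead he hmz) mulf_neq0.
have := inHZ_ge0 (dI z Iz _ nz) => ge; apply: lbW hmz _; lia.
Qed.

Lemma frac_upper I : frac_ideal H I -> exists c, forall g, lb g c -> I g.
Proof.
move=> fI; have [[IQ [I0 [Iadd Imul]]] [[u [Iu unz]] _]] := fI.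
have lu := frac_lau fI Iu.
have [m [hm um]] := lau_val lu unz.
have [u' [hu' uu']] := linv hm um.
exists (m + f + 1) => g hg.
have lg : lau g by exists (m + f + 1).
have lu' : lau u' by exists (- m).
have Rr : R (lsmul u' g).
  move=> n nz; apply: frob_big; have := lb_ge (lb_mul hu' hg) nz; lia.
have := Imul _ u Rr Iu.
by rewrite lsmulAC // (lsmulC lu' lu) uu' lsmul1.
Qed.

Lemma frac_add I : frac_ideal H I -> forall z z', I z -> I z' -> I (lsadd z z').
Proof. by move=> [[_ [_ [h _]]] _]. Qed.

Lemma frac_mul I : frac_ideal H I -> forall r z, R r -> I z -> I (lsmul r z).
Proof. by move=> [[_ [_ [_ h]]] _]. Qed.

Lemma frac0 I : frac_ideal H I -> I (ls0 K).
Proof. by move=> [[_ [h _]] _]. Qed.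

Lemma frac_scal I : frac_ideal H I -> forall c z, I z -> I (scal c z).
Proof.
move=> fI c z Iz; rewrite -lsmul_const; apply: (frac_mul fI) => //.
exact: (@kH_mono c 0%N).
Qed.

Lemma Kw_dual I : frac_ideal H I -> colon H Kw (colon H Kw I) = I.
Proof.
move=> fI; apply/seteqP; split => x; last first.
  move=> Ix; split; first by have [[IQ _] _] := fI; exact: IQ.
  move=> y [Qy hy]; have lx := frac_lau fI Ix; have ly := QR_lau Qy; rewrite (lsmulC lx ly); exact: hy.
move=> [Qx hx]; apply: contrapT => nIx.
have [b hb] := frac_lower fI; have [c hc] := frac_upper fI.
have [mx hmx] : lau x := QR_lau Qx.
pose lo := - `|b|%:Z - `|mx|%:Z - `|c|%:Z.
have hxlo : lb x lo by apply: lbW hmx _; rewrite /lo; lia.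
have hIlo : forall z, I z -> lb z lo by move=> z /hb h; apply: lbW h _; rewrite /lo; lia.
pose N := `|c - lo|%N.
pose win (z : ser) : 'rV[K]_N := \row_(k < N) z (lo + k%:Z).
pose W := fun v => exists z, I z /\ v = win z.
have W0 : W 0.
  exists (ls0 K); split; first exact: frac0 fI.
  by apply/matrixP => i j; rewrite !mxE.
have WD : forall u v, W u -> W v -> W (u + v).
  move=> u v [z [Iz ->]] [z' [Iz' ->]]; exists (lsadd z z'); split; first exact: frac_add.
  by apply/matrixP => i j; rewrite !mxE.
have WZ : forall a u, W u -> W (a *: u).
  move=> a u [z [Iz ->]]; exists (scal a z); split; first exact: frac_scal.
  by apply/matrixP => i j; rewrite !mxE.
have nWx : ~ W (win x).
  move=> [z [Iz e]]; apply: nIx.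
  have Id : I (fun n => x n - z n).
    apply: hc; apply: (@lbW _ _ (lo + N%:Z)); last by rewrite /N; lia.
    move=> n hn; have [lt|ge] := ltP n lo.
      by rewrite hxlo // hIlo // subr0.
    have kN : (`|n - lo| < N)%N by lia.
    have := congr1 (fun M : 'rV_N => M 0 (Ordinal kN)) e; rewrite !mxE /=.
    have -> : lo + `|n - lo|%N%:Z = n by lia.
    by move=> ->; rewrite subrr.
  have := frac_add fI Iz Id.
  by have -> : lsadd z (fun n => x n - z n) = x by apply: funext => n; rewrite /lsadd addrC subrK.
have [yv [hW hxy]] := sep W0 WD WZ nWx.
pose Y : ser := fun n : int => if (lo <= f - n) && (f - n < lo + N%:Z) then yv (absz (f - n - lo)%R) else 0.
have lY : lau Y.
  exists (f - lo - N%:Z) => n hn; rewrite /Y ifF //.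
  by apply/negbTE; rewrite negb_and -!ltNge -leNgt; apply/orP; right; lia.
have pair : forall z, lb z lo -> lsmul z Y f = \sum_(k < N) z (lo + k%:Z) * yv k.
  move=> z hz; rewrite (@lsmul_seq _ _ _ _ (rng lo N)) ?rng_uniq //.
    rewrite /rng big_map.
    have -> : iota 0 N = index_iota 0 N by rewrite /index_iota subn0.
    rewrite big_mkord; apply: eq_bigr => k _.
    rewrite /Y; have -> : f - (f - (lo + k%:Z)) = lo + k%:Z by lia.
    have kN := ltn_ord k.
    rewrite ifT; last by apply/andP; split; lia.
    by have -> : absz (lo + k%:Z - lo)%R = k by lia.
  move=> i zi; rewrite /Y; case: ifP => [/andP [h1 h2] _|]; last by rewrite eqxx.
  by rewrite mem_rng; apply/andP; split; lia.
have YI : colon H Kw I Y.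
  split; first exact: lau_QR.
  move=> z Iz; split; first exact: lau_mul lY (frac_lau fI Iz).
  move=> n hn [h [eh Hh]].
  pose z' := lsmul (mono 1 h%:Z) z.
  have Iz' : I z' by apply: (frac_mul fI) => //; exact: kH_mono.
  have lz := frac_lau fI Iz.
  have : lsmul z' Y f = 0.
    rewrite pair; last exact: hIlo.
    have := hW (win z') (ex_intro _ z' (conj Iz' erefl)).
    rewrite /win => e; rewrite -[RHS]e.
    by apply: eq_bigr => k _; rewrite mxE.
  rewrite (lsmulC (frac_lau fI Iz') lY) /z' (lsmulCA lY (lau_mono _ _) lz) lsmul_monol mul1r.
  rewrite -eh; have -> : f - (f - n) = n by lia.
  by move=> e0; move: hn; rewrite e0 eqxx.
have [_ hK] := hx Y YI.
have := hK f; rewrite subrr => /(_ _ inHZ0); apply; rewrite pair //.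
by move: hxy; rewrite /win; congr (~~ (_ == _)); apply: eq_bigr => k _; rewrite mxE.
Qed.

Lemma Kw_canonical : canonical_ideal H Kw.
Proof. split; [exact: frac_Kw | exact: Kw_dual]. Qed.

Definition Mx : set ser := fun z => R z /\ z 0 = 0.

Lemma frac_Mx : frac_ideal H Mx.
Proof.
have fp := f_pos.
split; [split; [|split; [|split]] | split].
- by move=> x [/kH_lau lx _]; exact: lau_QR.
- by split; [exact: kH0 | by []].
- by move=> x y [hx x0] [hy y0]; split; [exact: kH_add | rewrite /lsadd x0 y0 addr0].
- move=> r z hr [hz z0]; split; first exact: kH_mul.
  by have := lsmul_lead (kH_lb hr) (kH_lb hz); rewrite addr0 => ->; rewrite z0 mulr0.
- exists (mono 1 (f + 1)); split; last by apply: (@ls_neq0 _ _ (f + 1)); rewrite /mono eqxx oner_neq0.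
  split; first by apply: kH_monoZ; apply: frob_big; lia.
  by rewrite /mono ifF //; apply/eqP; lia.
- exists (one K); split; first exact: kH_one.
  split; first by apply: (@ls_neq0 _ _ 0); rewrite /one /mono eqxx oner_neq0.
  by move=> x [hx _]; rewrite lsmul1.
Qed.

Lemma colon_R w : frac_ideal H w -> colon H w R = w.
Proof.
move=> fw; apply/seteqP; split => x.
  by move=> [_ /(_ _ kH_one)]; rewrite lsmulr1.
move=> wx; split; first exact: (lau_QR (frac_lau fw wx)).
move=> r hr; rewrite (lsmulC (frac_lau fw wx) (kH_lau hr)); exact: frac_mul.
Qed.

Lemma canon_unique w : canonical_ideal H w -> exists x, lau x /\ x <> ls0 K /\
   w = (fun a => lau a /\ Kw (lsmul a x)).
Proof.
move=> [fw hd].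
have wwR : colon H w w = R by have := hd R frac_R; rewrite colon_R.
have lw := frac_lau fw.
pose L := colon H Kw w; pose L' := colon H w Kw.
have KL' : colon H w L' = Kw := hd Kw frac_Kw.
have wL : colon H Kw L = w := Kw_dual fw.
have lL : forall x, L x -> lau x by move=> x [/QR_lau].
have lL' : forall x, L' x -> lau x by move=> x [/QR_lau].
have prodR : forall x y, L x -> L' y -> R (lsmul x y).
  move=> x y Lx L'y; have lx := lL x Lx; have ly := lL' y L'y.
  move: Lx L'y => [Qx hx] [Qy hy].
  rewrite -wwR; split; first by apply: lau_QR; exact: lau_mul.
  move=> a wa; have la := lw a wa.
  rewrite (lsmulC lx ly) -(lsmulA ly lx la); apply: hy; exact: hx.
case: (pselect (exists x y, L x /\ L' y /\ lsmul x y 0 != 0)) => [[x [y [Lx [L'y nz]]]] | hno].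
- have Re := prodR x y Lx L'y.
  have [e' [Re' ee']] := kH_inv Re nz.
  have lx := lL x Lx; have ly := lL' y L'y; have le' := kH_lau Re'.
  exists x; split => //; split.
    by move=> x0; move: nz; rewrite x0 ls0mul /ls0 eqxx.
  apply/seteqP; split => a.
    move=> wa; have la := lw a wa; split => //; rewrite (lsmulC la lx).
    by case: Lx => _; apply.
  move=> [la Kax]; rewrite -wL; split; first exact: lau_QR.
  move=> z Lz; have lz := lL z Lz.
  have -> : lsmul a z = lsmul (lsmul (lsmul z y) e') (lsmul a x).
    rewrite (lsmulC (lau_mul (lau_mul lz ly) le') (lau_mul la lx)).
    rewrite (lsmulA (lau_mul la lx) (lau_mul lz ly) le').
    rewrite -(lsmulA la lx (lau_mul lz ly)) (lsmulCA lx lz ly).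
    rewrite (lsmulA la lz (lau_mul lx ly)) -(lsmulA (lau_mul la lz) (lau_mul lx ly) le').
    by rewrite ee' lsmulr1.
  apply: Kw_mul => //; apply: kH_mul => //; exact: prodR.
- exfalso.
  have hB : forall x y, L x -> L' y -> Mx (lsmul x y).
    move=> x y Lx L'y; split; first exact: prodR.
    apply/eqP; apply: contraT => nz; exfalso; apply: hno; by exists x, y.
  have sub : forall a, colon H w Mx a -> w a.
    move=> a [Qa ha]; rewrite -wL; split => //.
    move=> b Lb; rewrite -KL'; split; first by apply: lau_QR; apply: lau_mul; [exact: QR_lau | exact: lL].
    move=> y L'y; rewrite -(lsmulA (QR_lau Qa) (lL b Lb) (lL' y L'y)); apply: ha; exact: hB.
  have : Mx (one K).
    rewrite -(hd Mx frac_Mx); split; first by apply: lau_QR; exact: lau_mono.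
    by move=> a /sub; rewrite lsmul1.
  by move=> [_]; rewrite /one /mono eqxx; apply/eqP; exact: oner_neq0.
Qed.

Fixpoint xpow (a : ser) (n : nat) : ser :=
  match n with 0%N => one K | n'.+1 => lsmul (xpow a n') a end.

Lemma lau_xpow (a : ser) n : lau a -> lau (xpow a n).
Proof. by move=> la; elim: n => [|n IH] /=; [exact: lau_mono | exact: lau_mul]. Qed.

Lemma lsmulACA (a b c d : ser) : lau a -> lau b -> lau c -> lau d ->
  lsmul (lsmul a b) (lsmul c d) = lsmul (lsmul a c) (lsmul b d).
Proof.
move=> la lb' lc ld; rewrite -(lsmulA la lb' (lau_mul lc ld)) (lsmulCA lb' lc ld).
by rewrite (lsmulA la lc (lau_mul lb' ld)).
Qed.

Lemma xpow_inv (a a' : ser) n : lau a -> lau a' -> lsmul a a' = one K ->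
  lsmul (xpow a n) (xpow a' n) = one K.
Proof.
move=> la la' e; elim: n => [|n IH] /=; first exact: lsmul1.
by rewrite (lsmulACA (lau_xpow n la) la (lau_xpow n la') la') IH e lsmul1.
Qed.

Lemma prodI_ind (A B P : set ser) : P (ls0 K) ->
  (forall u v, P u -> P v -> P (lsadd u v)) ->
  (forall p q, A p -> B q -> P (lsmul p q)) ->
  forall u, prodI A B u -> P u.
Proof.
move=> P0 PD PM u [s [hs ->]]; elim: s hs => [|[p q] s IH] //= [[Ap Bq] hs].
by apply: PD; [exact: PM | exact: IH].
Qed.

Lemma prodI1 (A B : set ser) (p q : ser) : A p -> B q -> prodI A B (lsmul p q).
Proof. by move=> Ap Bq; exists [:: (p, q)]; split; [by [] | by rewrite /= lsadd0]. Qed.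

Lemma prodI0 (A B : set ser) : prodI A B (ls0 K).
Proof. by exists [::]. Qed.

Lemma prodI_add (A B : set ser) (u v : ser) : prodI A B u -> prodI A B v -> prodI A B (lsadd u v).
Proof.
move=> [s [hs ->]] [t [ht ->]]; exists (s ++ t); split.
  by elim: s hs => [|pq s IH] //= [h1 h2]; split => //; exact: IH.
elim: s {hs} => [|pq s IH] /=; first by rewrite ls0add.
by rewrite -IH lsaddA.
Qed.

Lemma lb_add (a b : ser) m : lb a m -> lb b m -> lb (lsadd a b) m.
Proof. by move=> ha hb n hn; rewrite /lsadd ha ?hb ?addr0. Qed.

Lemma lb0 m : lb (ls0 K) m.
Proof. by []. Qed.

Section Wx.
Variable w : set ser.
Hypothesis lw : forall a, w a -> lau a.

Lemma powI_lau m (p : ser) : powI H w m p -> lau p.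
Proof.
elim: m p => [|m IH] p /=; first exact: kH_lau.
apply: prodI_ind; [exact: lau0 | by move=> u v; apply: lau_add |].
by move=> p' q /IH h /lw h'; exact: lau_mul.
Qed.

Lemma powI0 m : powI H w m (ls0 K).
Proof. by case: m => [|m] /=; [exact: kH0 | exact: prodI0]. Qed.

Lemma powI_add m (u v : ser) : powI H w m u -> powI H w m v -> powI H w m (lsadd u v).
Proof. by case: m => [|m] /=; [exact: kH_add | exact: prodI_add]. Qed.

Lemma scal_add (c : K) (u v : ser) : scal c (lsadd u v) = lsadd (scal c u) (scal c v).
Proof. by apply: funext => n; rewrite /scal /lsadd mulrDr. Qed.

Lemma scal0 (c : K) : scal c (ls0 K) = ls0 K.
Proof. by apply: funext => n; rewrite /scal /ls0 mulr0. Qed.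

Lemma powI_scal m (c : K) (p : ser) : powI H w m p -> powI H w m (scal c p).
Proof.
elim: m p => [|m IH] p /=.
  by move=> hp; rewrite -lsmul_const; apply: kH_mul => //; exact: (@kH_mono c 0%N).
move: p; apply: (@prodI_ind (powI H w m) w (fun u => prodI (powI H w m) w (scal c u))).
- by rewrite scal0; exact: prodI0.
- by move=> u v hu hv; rewrite scal_add; exact: prodI_add.
- move=> p' q hp' hq; rewrite -(scal_mul c (powI_lau hp') (lw hq)).
  by apply: prodI1 => //; exact: IH.
Qed.

End Wx.

Lemma lsmul_scalr (a : ser) (c : K) (b : ser) : lau a -> lau b ->
  lsmul a (scal c b) = scal c (lsmul a b).
Proof.
move=> la lb'; rewrite (lsmulC la (lau_scal c lb')) (scal_mul c lb' la).
by rewrite (lsmulC lb' la).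
Qed.

Lemma mono_mul (a b : int) : lsmul (mono (1 : K) a) (mono 1 b) = mono 1 (a + b).
Proof.
apply: funext => k; rewrite lsmul_monol mul1r /mono.
by have -> : (k - a == b) = (k == a + b) by apply/eqP/eqP; lia.
Qed.

Section Kx.
Variable x x' : ser.
Hypothesis lx : lau x.
Hypothesis lx' : lau x'.
Hypothesis xx' : lsmul x x' = one K.
Hypothesis f1 : ~ inHZ H (f - 1).
Let w : set ser := fun a => lau a /\ Kw (lsmul a x).

Let lw : forall a, w a -> lau a.
Proof. by move=> a []. Qed.

Let x'x : lsmul x' x = one K.
Proof. by rewrite (lsmulC lx' lx). Qed.

Let wx' : w x'.
Proof. by split => //; rewrite x'x; exact: Kw_one. Qed.

Let wKw g : Kw g -> w (lsmul x' g).
Proof.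
move=> kg; have lg := kg.1; split; first exact: lau_mul.
by rewrite (lsmulAC lx' lg lx) x'x lsmul1.
Qed.

Let Kw_t : Kw (mono 1 1).
Proof.
split; first exact: lau_mono.
by move=> k; rewrite /mono; case: (k =P 1) => [->|]; rewrite ?eqxx.
Qed.

Lemma pow_bound m p : powI H w m p -> lb (lsmul (xpow x m) p) 0.
Proof.
elim: m p => [|m IH] p /=; first by rewrite lsmul1; exact: kH_lb.
move=> hp; suff : lau p /\ lb (lsmul (lsmul (xpow x m) x) p) 0 by case.
move: p hp; apply: (@prodI_ind (powI H w m) w).
- by split; [exact: lau0 | rewrite lsmul0].
- move=> u v [lu hu] [lv hv]; split; first exact: lau_add.
  rewrite lsmulDr //; [exact: lb_add | exact: lau_mul (lau_xpow m lx) lx].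
- move=> p q hp [lq kq]; have lp := powI_lau lw hp.
  split; first exact: lau_mul.
  rewrite (lsmulACA (lau_xpow m lx) lx lp lq).
  have := lb_mul (IH p hp) (Kw_lb kq); rewrite addr0 (lsmulC lq lx); exact.
Qed.

Lemma xpow_in m : powI H w m (xpow x' m).
Proof.
elim: m => [|m IH] /=; first exact: kH_one.
exact: prodI1.
Qed.

Lemma Bw_kt z : Bw H w z -> lb z 0.
Proof.
move=> [n [Qz hz]]; have := pow_bound (hz _ (xpow_in n)).
have lz := QR_lau Qz.
rewrite (lsmulCA (lau_xpow n lx) lz (lau_xpow n lx')) (xpow_inv n lx lx' xx').
by rewrite lsmulr1.
Qed.

Lemma monos m i : (i <= m)%N -> powI H w m (lsmul (xpow x' m) (mono 1 i%:Z)).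
Proof.
elim: m i => [|m IH] i.
  by rewrite leqn0 => /eqP ->; rewrite /= lsmul1; exact: kH_one.
have lX := lau_xpow m lx'.
rewrite leq_eqVlt => /orP [/eqP ->|]; last rewrite ltnS => im.
  have -> : lsmul (xpow x' m.+1) (mono 1 (m.+1)%:Z) =
      lsmul (lsmul (xpow x' m) (mono 1 m%:Z)) (lsmul x' (mono 1 1)).
    rewrite /= (lsmulACA lX (lau_mono _ _) lx' (lau_mono _ _)) mono_mul.
    by have -> : m%:Z + 1 = (m.+1)%:Z by lia.
  by apply: prodI1; [exact: IH | exact: wKw].
have -> : lsmul (xpow x' m.+1) (mono 1 i%:Z) = lsmul (lsmul (xpow x' m) (mono 1 i%:Z)) x'.
  by rewrite /= (lsmulAC lX lx' (lau_mono _ _)).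
by apply: prodI1; [exact: IH | exact: wx'].
Qed.

Lemma charP q : lau q -> lb (lsmul (xpow x `|f|) q) 0 -> powI H w `|f| q.
Proof.
move=> lq.
have [m nm] : exists m, `|f|%N = m.+1 by exists (`|f|.-1)%N; have := f_pos; lia.
rewrite nm => hg.
have fn : f = (m.+1)%:Z by have := f_pos; lia.
set g := lsmul (xpow x m.+1) q.
have {}hg : lb g 0 := hg.
have lX := lau_xpow m.+1 lx; have lX' := lau_xpow m.+1 lx'.
have lg : lau g := lau_mul lX lq.
have qE : q = lsmul (xpow x' m.+1) g.
  by rewrite /g (lsmulA lX' lX lq) (lsmulC lX' lX) (xpow_inv m.+1 lx lx' xx') lsmul1.
pose tr (j : nat) : ser := fun k => if (0 <= k) && (k < j%:Z) then g k else 0.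
pose tl : ser := fun k => if k <= f then 0 else g k.
have ltr : forall j, lau (tr j).
  by move=> j; exists 0 => k hk; rewrite /tr ifF //; apply/negbTE; rewrite negb_and -ltNge hk.
have ltl : lau tl by exists 0 => k hk; rewrite /tl (hg k hk); case: ifP.
have gE : g = lsadd (tr m.+2) tl.
  apply: funext => k; rewrite /lsadd /tr /tl.
  have [kf|kf] := leP k f.
    rewrite addr0; case: ifP => // /negbT; rewrite negb_and -ltNge -leNgt => /orP [kneg|].
      by rewrite (hg _ kneg).
    lia.
  rewrite ifF ?add0r //; apply/negbTE; rewrite negb_and -leNgt; apply/orP; right; lia.
have trP : forall j, (j <= m.+2)%N -> powI H w m.+1 (lsmul (xpow x' m.+1) (tr j)).
  elim => [|j IH] jn.
    have -> : tr 0%N = ls0 K.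
      apply: funext => k; rewrite /tr /ls0; case: ifP => // /andP [h1 h2]; lia.
    rewrite lsmul0; exact: powI0.
  have -> : tr j.+1 = lsadd (tr j) (scal (g j%:Z) (mono 1 j%:Z)).
    apply: funext => k; rewrite /tr /lsadd /scal /mono.
    case: (k =P j%:Z) => [->|kj].
      rewrite mulr1 ifT; last by apply/andP; split; lia.
      by rewrite ifF ?add0r //; apply/negbTE; rewrite negb_and; apply/orP; right; lia.
    rewrite mulr0 addr0; congr (if _ then _ else _); apply/andP/andP => -[h1 h2]; split => //; lia.
  rewrite (lsmulDr lX' (ltr j) (lau_scal _ (lau_mono _ _))).
  apply: powI_add; first by apply: IH; lia.
  rewrite (lsmul_scalr _ lX' (lau_mono _ _)); apply: powI_scal => //.
  by apply: monos; lia.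
have tlP : powI H w m.+1 (lsmul (xpow x' m.+1) tl).
  rewrite /= -(lsmulA (lau_xpow m lx') lx' ltl).
  apply: prodI1; first exact: xpow_in.
  apply: wKw; split => // k; rewrite /tl; case: ifP => [_|/negbT]; first by rewrite eqxx.
  rewrite -ltNge => fk _.
  by move/inHZ_ge0; lia.
rewrite qE gE (lsmulDr lX' (ltr _) ltl); apply: powI_add => //; exact: trP.
Qed.

Lemma kt_Bw z : lb z 0 -> Bw H w z.
Proof.
move=> hz; have lz : lau z by exists 0.
exists `|f|%N; split; first exact: lau_QR.
move=> p hp; have lp := powI_lau lw hp.
apply: charP; first exact: lau_mul.
rewrite (lsmulCA (lau_xpow _ lx) lz lp).
by have := lb_mul hz (pow_bound hp); rewrite addr0.
Qed.

Lemma bw_cond : bw H w = conductor H.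
Proof.
apply/seteqP; split => z [Bz hz]; split.
- exact: Bw_kt.
- by move=> y /kt_Bw; apply: hz.
- exact: kt_Bw.
- by move=> y /Bw_kt; apply: hz.
Qed.

End Kx.

Section P4.
Hypothesis f1H : inHZ H (f - 1).

Definition Ssup (z : ser) := forall k, z k != 0 -> 0 <= k /\ k != 1.

Lemma Ssup_mul a b : Ssup a -> Ssup b -> Ssup (lsmul a b).
Proof.
move=> ha hb k /lsmul_supp [i [ai bi]]; have [h1 h2] := ha _ ai; have [h3 h4] := hb _ bi.
split; lia.
Qed.

Lemma Ssup_add a b : Ssup a -> Ssup b -> Ssup (lsadd a b).
Proof.
move=> ha hb k; rewrite /lsadd.
have [x0|xn] := eqVneq (a k) 0; first by rewrite x0 add0r; apply: hb.
by move=> _; apply: ha.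
Qed.

Lemma Kw_Ssup z : Kw z -> Ssup z.
Proof.
move=> kz k nz; split; first exact: lb_ge (Kw_lb kz) nz.
by apply/eqP => e; move: nz; rewrite e => /(kz.2); apply.
Qed.

Lemma R_Ssup z : R z -> Ssup z.
Proof.
move=> hz k /hz [m [-> hm]]; split => //; apply/eqP => -[e]; apply: notH1.
by rewrite -e.
Qed.

Lemma powK_Ssup m p : powI H Kw m p -> Ssup p.
Proof.
elim: m p => [|m IH] p /=; first exact: R_Ssup.
apply: prodI_ind; [by move=> k; rewrite /ls0 eqxx | exact: Ssup_add |].
by move=> p' q /IH h /Kw_Ssup h'; exact: Ssup_mul.
Qed.

Lemma one_powK m : powI H Kw m (one K).
Proof.
elim: m => [|m IH] /=; first exact: kH_one.
by rewrite -[one K]lsmul1; apply: prodI1 => //; exact: Kw_one.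
Qed.

Lemma not_min : ~ (bw H Kw = conductor H).
Proof.
move=> e.
pose T := mono (1 : K) (f - 1).
have BT : bw H Kw T.
  split.
  - exists 0%N; split; first exact: lau_QR (lau_mono _ _).
    move=> r hr k; rewrite lsmul_monol mul1r => nz; have := hr _ nz.
    move=> h; have := inHZ_add f1H h.
    by have -> : f - 1 + (k - (f - 1)) = k by lia.
  - move=> y [n [Qy hy]].
    have Sy : Ssup y by have := hy _ (one_powK n); rewrite lsmulr1; exact: powK_Ssup.
    move=> k; rewrite lsmul_monol mul1r => nz; have [h1 h2] := Sy _ nz.
    have [e0|ne0] := eqVneq (k - (f - 1)) 0.
      by have -> : k = f - 1 by lia.
    apply: frob_big; lia.
rewrite e in BT; case: BT => _ /(_ (mono 1 1)).
have ht : lb (mono (1 : K) 1) 0 by move=> k hk; rewrite /mono ifF //; apply/eqP; lia.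
move=> /(_ ht) /(_ f); rewrite lsmul_monol mul1r /mono.
have -> : (f - (f - 1) == 1) = true by apply/eqP; lia.
by move=> /(_ (oner_neq0 _)); apply: frob_not.
Qed.

End P4.
End Semi.

Theorem theorem3p1 (K : fieldType) (H : nat -> Prop) (f : int) :
  numerical_semigroup H ->
  (exists n : nat, ~ H n) ->
  is_frobenius H f ->
  (min_canonical_conductor K H <-> is_quasi_frobenius H (f - 1)).
Proof.
move=> [H0 [Hadd [NH HN]]] Hprop hf; split.
- move=> hmin.
  have nf1 : ~ inHZ H (f - 1).
    move=> f1H; apply: (not_min H0 Hadd HN hf Hprop f1H).
    by apply: hmin; exact: (Kw_canonical K H0 Hadd HN hf).
  split => // h Hh h0.
  have h1 : h <> 1%N by move=> e; apply: (notH1 H0 Hadd Hprop); rewrite -e.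
  by apply: (frob_big hf); lia.
- move=> [nf1 _] w cw.
  have [x [lx [xnz ->]]] := canon_unique H0 Hadd HN hf Hprop cw.
  have [m [hm xm]] := lau_val lx xnz.
  have [x' [hx' xx']] := linv hm xm.
  apply: (bw_cond H0 Hadd HN hf Hprop lx _ xx' nf1).
  by exists (- m).
Qed.
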